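(* Let $(F_r)_{r\in\mathbb Z}$ be the Fibonacci numbers and $(\mathcal F_r)_{r\in\mathbb Z}$ any generalized Fibonacci sequence. Then for all integers $r,s$ and every non-negative integer $k$: \[ F_s\sum_{j=0}^kF_{s+1}^{k-j}\mathcal F_{r-1+sj}=\mathcal F_{r+s(k+1)}-F_{s+1}^{k+1}\mathcal F_r, \] \[ \sum_{j=0}^k(-1)^jF_s^{k-j}F_{s+1}^j\mathcal F_{r-k+s+j}=(-1)^kF_{s+1}^{k+1}\mathcal F_r+F_s^{k+1}\mathcal F_{r-k-1}, \] \[ F_s\sum_{j=0}^kF_{s-1}^{k-j}\mathcal F_{r-sk-s+1+sj}=\mathcal F_r-F_{s-1}^{k+1}\mathcal F_{r-(k+1)s}. \]
   Context: A generalized Fibonacci sequence is a two-sided sequence $(\mathcal F_r)_{r\in\mathbb Z}$ of complex numbers with $\mathcal F_r=\mathcal F_{r-1}+\mathcal F_{r-2}$ for all $r\in\mathbb Z$. The Fibonacci numbers $F_r$ are the one with $F_0=0$, $F_1=1$ (extended to negative indices by the recurrence). The convention $0^0=1$ is used. *)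

(* Defs.v *)
From HB Require Import structures.
From mathcomp Require Import all_boot all_order all_algebra.
Set Implicit Arguments. Unset Strict Implicit. Unset Printing Implicit Defensive.
Import Order.TTheory GRing.Theory Num.Theory.
Local Open Scope ring_scope.

Definition is_gen_fib (R : comNzRingType) (f : int -> R) : Prop :=
  forall r : int, f r = f (r - 1) + f (r - 2).

Definition is_fib (R : comNzRingType) (F : int -> R) : Prop :=
  is_gen_fib F /\ F 0 = 0 /\ F 1 = 1.

(* Main.v *)
Require Import Defs.
From HB Require Import structures.
From mathcomp Require Import all_boot all_order all_algebra.
From mathcomp Require Import ring lra zify.
Import Order.TTheory GRing.Theory Num.Theory.
Local Open Scope ring_scope.

Section Aux.
Variable R : comNzRingType.

Lemma tele1 (x : R) (f : nat -> R) k :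
  \sum_(j < k.+1) x ^+ (k - j)%N * (f j.+1 - x * f j) = f k.+1 - x ^+ k.+1 * f 0%N.
Proof.
elim: k => [|k IH]; first by rewrite big_ord1 subnn expr0 expr1 mul1r.
rewrite big_ord_recr /= subnn expr0 mul1r.
have -> : \sum_(i < k.+1) x ^+ (k.+1 - i)%N * (f i.+1 - x * f i)
        = x * \sum_(i < k.+1) x ^+ (k - i)%N * (f i.+1 - x * f i).
  rewrite mulr_sumr; apply: eq_bigr => i _.
  by rewrite (@subSn i k (ltn_ord i)) exprS mulrA.
rewrite IH !exprS; ring.
Qed.

Lemma tele2 (V : nat -> R) k :
  \sum_(j < k.+1) (V j - V j.+1) = V 0%N - V k.+1.
Proof.
elim: k => [|k IH]; first by rewrite big_ord1.
rewrite big_ord_recr /= IH; ring.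
Qed.

Variables (F G : int -> R).
Hypothesis hF : is_fib F.
Hypothesis hG : is_gen_fib G.

Lemma Gstep (a : int) : G (a + 2) = G (a + 1) + G a.
Proof. rewrite hG; congr (G _ + G _); lia. Qed.

Lemma Fstep (a : int) : F (a + 2) = F (a + 1) + F a.
Proof. case: hF => h _; rewrite h; congr (F _ + F _); lia. Qed.

Definition Q (s : int) := forall a, G (a + s) = F s * G (a + 1) + F (s - 1) * G a.

Lemma Q0 : Q 0.
Proof.
case: hF => h [h0 h1] a.
have hm1 : F (0 - 1) = 1.
  have := h 1; rewrite h1 h0 add0r => <-.
  by [].
by rewrite addr0 h0 hm1 mul0r add0r mul1r.
Qed.

Lemma Q1 : Q 1.
Proof. case: hF => h [h0 h1] a. by rewrite subrr h0 h1 mul1r mul0r addr0. Qed.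

Lemma Qfwd s : Q s -> Q (s + 1) -> Q (s + 2).
Proof.
move=> H0 H1 a.
have e1 : a + (s + 2) = (a + s) + 2 by ring.
rewrite e1 Gstep.
have -> : a + s + 1 = a + (s + 1) by ring.
rewrite H0 H1 Fstep.
have -> : s + 2 - 1 = (s - 1) + 2 by ring.
rewrite Fstep.
have -> : s - 1 + 1 = s by ring.
have -> : s + 1 - 1 = s by ring.
ring.
Qed.

Lemma Qbwd s : Q (s + 1) -> Q (s + 2) -> Q s.
Proof.
move=> H1 H2 a.
have e : G (a + s) = G (a + s + 2) - G (a + s + 1) by rewrite Gstep; ring.
rewrite e.
have -> : a + s + 2 = a + (s + 2) by ring.
have -> : a + s + 1 = a + (s + 1) by ring.
rewrite H2 H1.
have -> : s + 2 - 1 = s + 1 by ring.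
have -> : s + 1 - 1 = s by ring.
have fs : F (s + 2) = F (s + 1) + F s by rewrite Fstep.
have fs' : F (s + 1) = F s + F (s - 1).
  have := Fstep (s - 1).
  have -> : s - 1 + 2 = s + 1 by ring.
  have -> : s - 1 + 1 = s by ring.
  by [].
rewrite fs fs'; ring.
Qed.

Lemma Qall s : Q s.
Proof.
have pos : forall n : nat, Q n%:Z /\ Q (n.+1)%:Z.
  elim=> [|n [A B]]; first by split; [exact: Q0 | exact: Q1].
  split => //.
  have -> : (n.+2)%:Z = n%:Z + 2 by rewrite -addn2 PoszD.
  have B' : Q (n%:Z + 1) by rewrite -PoszD addn1.
  exact: (@Qfwd n%:Z A B').
have neg : forall n : nat, Q (- n%:Z) /\ Q (- n%:Z + 1).
  elim=> [|n [A B]].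
    rewrite oppr0 add0r; split; [exact: Q0 | exact: Q1].
  have e1 : - (n.+1)%:Z + 1 = - n%:Z by rewrite -addn1 PoszD; ring.
  have e2 : - (n.+1)%:Z + 2 = - n%:Z + 1 by rewrite -addn1 PoszD; ring.
  split; last by rewrite e1.
  apply: (@Qbwd (- (n.+1)%:Z)); by rewrite ?e1 ?e2.
case: s => n; first by case: (pos n).
rewrite NegzE; by case: (neg n.+1).
Qed.

Lemma step1 a s : F s * G (a - 1) = G (a + s) - F (s + 1) * G a.
Proof.
have -> : G (a + s) = F s * G (a + 1) + F (s - 1) * G a by exact: (Qall s a).
have fs' : F (s + 1) = F s + F (s - 1).
  have := Fstep (s - 1).
  have -> : s - 1 + 2 = s + 1 by ring.
  by have -> : s - 1 + 1 = s by ring.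
have ga : G (a + 1) = G a + G (a - 1).
  have := Gstep (a - 1).
  have -> : a - 1 + 2 = a + 1 by ring.
  by have -> : a - 1 + 1 = a by ring.
rewrite fs' ga; ring.
Qed.

Lemma step2 a s : G (a + s) = F s * G (a - 1) + F (s + 1) * G a.
Proof. rewrite step1; ring. Qed.

End Aux.

Theorem mainTheorem6 (R : comNzRingType) (F G : int -> R)
  (hF : is_fib F) (hG : is_gen_fib G) (r s : int) (k : nat) :
  [/\ F s * (\sum_(j < k.+1) F (s + 1) ^+ (k - j)%N * G (r - 1 + s * (j : nat)%:Z))
        = G (r + s * (k.+1)%:Z) - F (s + 1) ^+ k.+1 * G r,
      \sum_(j < k.+1) (-1) ^+ (j : nat) * F s ^+ (k - j)%N * F (s + 1) ^+ (j : nat)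
                        * G (r - k%:Z + s + (j : nat)%:Z)
        = (-1) ^+ k * F (s + 1) ^+ k.+1 * G r + F s ^+ k.+1 * G (r - k%:Z - 1)
    & F s * (\sum_(j < k.+1) F (s - 1) ^+ (k - j)%N
                               * G (r - s * k%:Z - s + 1 + s * (j : nat)%:Z))
        = G r - F (s - 1) ^+ k.+1 * G (r - (k.+1)%:Z * s)].
Proof.
split.
- rewrite mulr_sumr.
  have := tele1 R (F (s + 1)) (fun j : nat => G (r + s * j%:Z)) k.
  rewrite mulr0 addr0 => <-.
  apply: eq_bigr => j _.
  rewrite mulrCA; congr (_ * _).
  have -> : r - 1 + s * (j : nat)%:Z = (r + s * (j : nat)%:Z) - 1 by ring.
  rewrite (@step1 R F G hF hG).
  by have -> : r + s * (j : nat)%:Z + s = r + s * (j.+1)%:Z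
    by rewrite -(addn1 j) PoszD; ring.
- set x := F s; set y := F (s + 1).
  have := tele2 R (fun j : nat => (-1) ^+ j * x ^+ (k.+1 - j)%N * y ^+ j
                                 * G (r - k%:Z - 1 + j%:Z)) k.
  rewrite subn0 subnn expr0 addr0 expr0 mul1r.
  have -> : r - k%:Z - 1 + (k.+1)%:Z = r by rewrite -(addn1 k) PoszD; ring.
  move=> H.
  have -> : (-1) ^+ k * y ^+ k.+1 * G r + x ^+ k.+1 * G (r - k%:Z - 1)
          = x ^+ k.+1 * 1 * G (r - k%:Z - 1) - (-1) ^+ k.+1 * x ^+ 0 * y ^+ k.+1 * G r
    by rewrite !exprS expr0; ring.
  rewrite -H; apply: eq_bigr => j _.
  rewrite (@subSn j k (ltn_ord j)) !exprS.
  have -> : r - k%:Z + s + (j : nat)%:Z = (r - k%:Z + j%:Z) + s by ring.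
  rewrite (@step2 R F G hF hG).
  have -> : r - k%:Z + (j : nat)%:Z - 1 = r - k%:Z - 1 + j%:Z by ring.
  have -> : r - k%:Z + (j : nat)%:Z = r - k%:Z - 1 + (j.+1)%:Z
    by rewrite -(addn1 j) PoszD; ring.
  rewrite -/x -/y; ring.
- rewrite mulr_sumr.
  have := tele1 R (F (s - 1)) (fun j : nat => G (r - (k.+1)%:Z * s + s * j%:Z)) k.
  rewrite mulr0 addr0.
  have -> : r - (k.+1)%:Z * s + s * (k.+1)%:Z = r by ring.
  move=> <-.
  apply: eq_bigr => j _.
  rewrite mulrCA; congr (_ * _).
  have -> : r - s * k%:Z - s + 1 + s * (j : nat)%:Z
          = (r - (k.+1)%:Z * s + s * (j : nat)%:Z) + 1
    by rewrite [(k.+1)%:Z]intS; ring.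
  have -> : r - (k.+1)%:Z * s + s * (j.+1)%:Z
          = (r - (k.+1)%:Z * s + s * (j : nat)%:Z) + s
    by rewrite [(j.+1)%:Z]intS; ring.
  rewrite (@Qall R F G hF hG s (r - (k.+1)%:Z * s + s * (j : nat)%:Z)).
  ring.
Qed.
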